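(* Let $G$ be a positively $0$-transitive Lie superalgebra such that $G_+$ is generated by $G_1$. Let $U$ be the universal Lie superalgebra associated to $U_1:=G_1$, let $D_{2+}\subseteq U_{2+}$ be the kernel of the canonical surjective Lie superalgebra morphism $U_+\to G_+$ restricting to the identity on $U_1$, and let $N=\{x\in U:[x,d]\in D_{2+}\text{ for all }d\in D_{2+}\}$ be the idealiser of $D_{2+}$ in $U$. Then there is an injective Lie superalgebra morphism from $G$ into the prolongation $N/D_{2+}$ of $G_+$.
   Context: All vector spaces are over $\mathbb{K}=\mathbb{R}$ or $\mathbb{C}$, $\mathbb{Z}$-graded, parity equal to degree mod 2; morphisms preserve degree. A Lie superalgebra is a graded space with degree-preserving bracket satisfying graded antisymmetry and graded Jacobi. $G_\pm=\bigoplus_{k\ge1}G_{\pm k}$, $G_{0-}=\bigoplus_{k\le0}G_k$, $U_{2+}=\bigoplus_{k\ge2}U_k$. $G$ is positively $0$-transitive if for $x\in G_{0-}$, $[G_+,x]=0$ implies $x=0$. Universal Lie superalgebra: for $U_1$ concentrated in degree 1 (odd), put $U_0=\mathrm{End}(U_1)$, $U_{-p+1}=\mathrm{Hom}(U_1,U_{-p+2})$ for $p\ge2$; on $U_{1-}=\bigoplus_{k\le1}U_k$ define brackets recursively by $[x,u]=x(u)$, $[u,x]=-(-1)^{|x|}x(u)$, $[x,y](u)=[x,y(u)]+(-1)^{|y|}[x(u),y]$ ($x,y\in U_{0-}$, $u\in U_1$), giving a semilocal Lie superalgebra; $U$ is the unique Lie superalgebra extending it such that $U_+$ is the free Lie superalgebra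 generated by $U_1$. *)

(* Defs.v *)
From mathcomp Require Import all_boot all_algebra complex.
From mathcomp Require Import reals.

Unset Implicit Arguments.
Unset Printing Implicit Defensive.
Import GRing.Theory Num.Theory.
Local Open Scope ring_scope.

Section GradedLie.
Variable K : fieldType.

Record GLSA := {
  car : lmodType K;
  deg : int -> car -> Prop;
  br  : car -> car -> car
}.

Definition par (i : int) : bool := odd `|i|%N.
Definition ssign (i j : int) : K := (-1) ^+ (par i && par j).

Definition in_degs (V : GLSA) (P : int -> Prop) (x : car V) : Prop :=
  exists (s : seq int) (f : int -> car V),
    (forall k, k \in s -> P k /\ deg V k (f k)) /\ x = \sum_(k <- s) f k.

Definition plus_part (V : GLSA) := in_degs V (fun k => 0 < k).
Definition nonpos_part (V : GLSA) := in_degs V (fun k => k <= 0).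

Definition is_GLSA (V : GLSA) : Prop :=
  (forall k, deg V k 0 /\
     forall (a : K) x y, deg V k x -> deg V k y -> deg V k (a *: x + y)) /\
  (forall x, in_degs V (fun _ => True) x) /\
  (forall (s : seq int) (f : int -> car V), uniq s ->
     (forall k, k \in s -> deg V k (f k)) -> \sum_(k <- s) f k = 0 ->
     forall k, k \in s -> f k = 0) /\
  (forall (a : K) x y z, br V (a *: x + y) z = a *: br V x z + br V y z) /\
  (forall (a : K) x y z, br V z (a *: x + y) = a *: br V z x + br V z y) /\
  (forall i j x y, deg V i x -> deg V j y -> deg V (i + j) (br V x y)) /\
  (forall i j x y, deg V i x -> deg V j y ->
     br V x y = - (ssign i j *: br V y x)) /\
  (forall i j x y z, deg V i x -> deg V j y ->
     br V x (br V y z) = br V (br V x y) z + ssign i j *: br V y (br V x z)).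

Definition pos_0_transitive (G : GLSA) : Prop :=
  forall x, nonpos_part G x -> (forall y, plus_part G y -> br G y x = 0) -> x = 0.

Definition plus_generated_by_deg1 (G : GLSA) : Prop :=
  forall S : car G -> Prop,
    S 0 -> (forall (a : K) x y, S x -> S y -> S (a *: x + y)) ->
    (forall x y, S x -> S y -> S (br G x y)) ->
    (forall x, deg G 1 x -> S x) ->
    forall y, plus_part G y -> S y.

Definition morph_on {V W : GLSA} (S : car V -> Prop) (F : car V -> car W) :=
  (forall (a : K) x y, S x -> S y -> F (a *: x + y) = a *: F x + F y) /\
  (forall k x, S x -> deg V k x -> deg W k (F x)) /\
  (forall x y, S x -> S y -> F (br V x y) = br W (F x) (F y)).

Definition plus_free_on_deg1 (U : GLSA) : Prop :=
  forall (L : GLSA), is_GLSA L ->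
  (forall f : car U -> car L,
     (forall (a : K) u v, deg U 1 u -> deg U 1 v -> f (a *: u + v) = a *: f u + f v) ->
     (forall u, deg U 1 u -> deg L 1 (f u)) ->
     exists F : car U -> car L,
       morph_on (plus_part U) F /\ forall u, deg U 1 u -> F u = f u) /\
  (forall F1 F2 : car U -> car L,
     morph_on (plus_part U) F1 -> morph_on (plus_part U) F2 ->
     (forall u, deg U 1 u -> F1 u = F2 u) ->
     forall x, plus_part U x -> F1 x = F2 x).

(* U is the universal Lie superalgebra associated to U_1 := G_1, the
   identification G_1 ~ U_1 being the linear bijection j. *)
Definition universal_LSA_of (G U : GLSA) (j : car G -> car U) : Prop :=
  is_GLSA U /\
  (forall (a : K) g h, deg G 1 g -> deg G 1 h -> j (a *: g + h) = a *: j g + j h) /\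
  (forall g, deg G 1 g -> deg U 1 (j g)) /\
  (forall g h, deg G 1 g -> deg G 1 h -> j g = j h -> g = h) /\
  (forall u, deg U 1 u -> exists2 g, deg G 1 g & j g = u) /\
  (* U_0 = End(U_1), U_k = Hom(U_1, U_{k+1}) for k <= -1, x(u) = [x,u]:
     x |-> [x, -]|_{U_1} is a linear bijection U_k -> Hom(U_1, U_{k+1}) *)
  (forall k : int, k <= 0 ->
     (forall x, deg U k x -> (forall u, deg U 1 u -> br U x u = 0) -> x = 0) /\
     (forall phi : car U -> car U,
        (forall (a : K) u v, deg U 1 u -> deg U 1 v ->
           phi (a *: u + v) = a *: phi u + phi v) ->
        (forall u, deg U 1 u -> deg U (k + 1) (phi u)) ->
        exists2 x, deg U k x & forall u, deg U 1 u -> br U x u = phi u)) /\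
  plus_free_on_deg1 U.

Definition canonical_proj (G U : GLSA) (j : car G -> car U) (pi : car U -> car G) :=
  morph_on (plus_part U) pi /\ forall g, deg G 1 g -> pi (j g) = g.

Definition Dker {U G : GLSA} (pi : car U -> car G) (x : car U) : Prop :=
  plus_part U x /\ pi x = 0.

Definition idealiser {U : GLSA} (D : car U -> Prop) (x : car U) : Prop :=
  forall d, D d -> D (br U x d).

(* The quotient N/D is represented through representatives:
   psi g in N is a representative of the class of g's image, the class
   of x being x + D; the grading on N/D is (N_k + D)/D. *)
Definition inj_morph_to_quotient (G U : GLSA) (N D : car U -> Prop) : Prop :=
  exists psi : car G -> car U,
    (forall g, N (psi g)) /\
    (forall (a : K) g h, D (psi (a *: g + h) - (a *: psi g + psi h))) /\
    (forall k g, deg G k g -> exists y, [/\ deg U k y, N y & D (psi g - y)]) /\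
    (forall g h, D (psi (br G g h) - br U (psi g) (psi h))) /\
    (forall g, D (psi g) -> g = 0).

Definition prop3p9_statement : Prop :=
  forall (G U : GLSA) (j : car G -> car U) (pi : car U -> car G),
    is_GLSA G -> pos_0_transitive G -> plus_generated_by_deg1 G ->
    universal_LSA_of G U j -> canonical_proj G U j pi ->
    inj_morph_to_quotient G U (idealiser (Dker pi)) (Dker pi).

End GradedLie.

(* Main.v *)
Require Import Defs.
From HB Require Import structures.
From mathcomp Require Import all_boot all_algebra complex.
From mathcomp Require Import reals.
From mathcomp Require Import boolp all_order zify.

Set Implicit Arguments.
Unset Strict Implicit.
Unset Printing Implicit Defensive.
Import Order.TTheory GRing.Theory Num.Theory.
Local Open Scope ring_scope.



Lemma sum_supp (M : nmodType) (F : int -> M) (s1 s2 : seq int) :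
  uniq s1 -> uniq s2 -> (forall k, k \notin s1 -> F k = 0) ->
  (forall k, k \notin s2 -> F k = 0) ->
  \sum_(k <- s1) F k = \sum_(k <- s2) F k.
Proof.
move=> u1 u2 h1 h2.
have e1 : forall s s' : seq int, (forall k, k \notin s' -> F k = 0) ->
    \sum_(k <- s) F k = \sum_(k <- [seq k <- s | k \in s']) F k.
  move=> s s' h; rewrite big_filter [RHS]big_mkcond /=; apply: eq_bigr => k _.
  by case: ifP => // /negbT /h.
rewrite (e1 s1 s2 h2) (e1 s2 s1 h1); apply: perm_big.
apply: uniq_perm; rewrite ?filter_uniq // => k.
by rewrite !mem_filter andbC.
Qed.

Definition epsd (T : Type) (d : T) (P : T -> Prop) : T :=
  match pselect (exists x, P x) with
  | left h => proj1_sig (cid h)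
  | right _ => d end.

Lemma epsdP (T : Type) (d : T) (P : T -> Prop) : (exists x, P x) -> P (epsd d P).
Proof. by rewrite /epsd => h; case: pselect => // h'; case: (cid h'). Qed.

Section Graded.
Variable K : fieldType.
Variable V : GLSA K.
Hypothesis HV : is_GLSA K V.

Local Notation dg := (deg K V).
Local Notation br := (br K V).

Lemma deg0 k : dg k 0.
Proof. by case: HV => h _; case: (h k). Qed.
Lemma degDZ k a x y : dg k x -> dg k y -> dg k (a *: x + y).
Proof. by case: HV => h _; case: (h k) => _; apply. Qed.
Lemma degD k x y : dg k x -> dg k y -> dg k (x + y).
Proof. by move=> hx hy; have := degDZ 1 hx hy; rewrite scale1r. Qed.
Lemma degZ k a x : dg k x -> dg k (a *: x).
Proof. by move=> hx; have := degDZ a hx (deg0 k); rewrite addr0. Qed.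
Lemma degN k x : dg k x -> dg k (- x).
Proof. by move=> hx; rewrite -scaleN1r; apply: degZ. Qed.
Lemma degB k x y : dg k x -> dg k y -> dg k (x - y).
Proof. by move=> hx hy; apply: degD => //; apply: degN. Qed.
Lemma deg_sum k (I : eqType) (r : seq I) (F : I -> car K V) :
  (forall i, i \in r -> dg k (F i)) -> dg k (\sum_(i <- r) F i).
Proof.
elim: r => [|i r IH] h; first by rewrite big_nil; apply: deg0.
by rewrite big_cons; apply: degD; [apply: h; rewrite mem_head|
  apply: IH => j hj; apply: h; rewrite in_cons hj orbT].
Qed.

Lemma decompV x : in_degs K V (fun _ => True) x.
Proof. by case: HV => _ [h _]; apply: h. Qed.
Lemma dsum (s : seq int) (f : int -> car K V) : uniq s ->
  (forall k, k \in s -> dg k (f k)) -> \sum_(k <- s) f k = 0 ->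
  forall k, k \in s -> f k = 0.
Proof. by case: HV => _ [_ [h _]]; apply: h. Qed.
Lemma brDZl a x y z : br (a *: x + y) z = a *: br x z + br y z.
Proof. by case: HV => _ [_ [_ [h _]]]; apply: h. Qed.
Lemma brDZr a x y z : br z (a *: x + y) = a *: br z x + br z y.
Proof. by case: HV => _ [_ [_ [_ [h _]]]]; apply: h. Qed.
Lemma brdeg i j x y : dg i x -> dg j y -> dg (i + j) (br x y).
Proof. by case: HV => _ [_ [_ [_ [_ [h _]]]]]; apply: h. Qed.
Lemma antisym i j x y : dg i x -> dg j y -> br x y = - (ssign K i j *: br y x).
Proof. by case: HV => _ [_ [_ [_ [_ [_ [h _]]]]]]; apply: h. Qed.
Lemma jacobi i j x y z : dg i x -> dg j y ->
  br x (br y z) = br (br x y) z + ssign K i j *: br y (br x z).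
Proof. by case: HV => _ [_ [_ [_ [_ [_ [_ h]]]]]]; apply: h. Qed.

Lemma br0l z : br 0 z = 0.
Proof.
have := brDZl 1 0 0 z; rewrite !scale1r addr0 => h.
by apply: (addrI (br 0 z)); rewrite addr0 -h.
Qed.
Lemma br0r z : br z 0 = 0.
Proof.
have := brDZr 1 0 0 z; rewrite !scale1r addr0 => h.
by apply: (addrI (br z 0)); rewrite addr0 -h.
Qed.
Lemma brDl x y z : br (x + y) z = br x z + br y z.
Proof. by have := brDZl 1 x y z; rewrite !scale1r. Qed.
Lemma brDr x y z : br z (x + y) = br z x + br z y.
Proof. by have := brDZr 1 x y z; rewrite !scale1r. Qed.
Lemma brZl a x z : br (a *: x) z = a *: br x z.
Proof. by have := brDZl a x 0 z; rewrite !addr0 br0l addr0. Qed.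
Lemma brZr a x z : br z (a *: x) = a *: br z x.
Proof. by have := brDZr a x 0 z; rewrite !addr0 br0r addr0. Qed.
Lemma brNl x z : br (- x) z = - br x z.
Proof. by rewrite -scaleN1r brZl scaleN1r. Qed.
Lemma brNr x z : br z (- x) = - br z x.
Proof. by rewrite -scaleN1r brZr scaleN1r. Qed.
Lemma brBl x y z : br (x - y) z = br x z - br y z.
Proof. by rewrite brDl brNl. Qed.
Lemma brBr x y z : br z (x - y) = br z x - br z y.
Proof. by rewrite brDr brNr. Qed.
Lemma br_suml (I : Type) (r : seq I) (F : I -> car K V) z :
  br (\sum_(i <- r) F i) z = \sum_(i <- r) br (F i) z.
Proof.
elim: r => [|i r IH]; first by rewrite !big_nil br0l.
by rewrite !big_cons brDl IH.
Qed.
Lemma br_sumr (I : Type) (r : seq I) (F : I -> car K V) z :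
  br z (\sum_(i <- r) F i) = \sum_(i <- r) br z (F i).
Proof.
elim: r => [|i r IH]; first by rewrite !big_nil br0r.
by rewrite !big_cons brDr IH.
Qed.

Lemma deg_uniq k l x : dg k x -> dg l x -> k != l -> x = 0.
Proof.
move=> hk hl nkl.
have u : uniq [:: k; l] by rewrite /= inE (negbTE nkl).
have hd : forall i, i \in [:: k; l] -> dg i ((fun i => if i == k then x else - x) i).
  move=> i; rewrite !inE => /orP[]/eqP ->; first by rewrite eqxx.
  by rewrite eq_sym (negbTE nkl); apply: degN.
have hs : \sum_(i <- [:: k; l]) (fun i => if i == k then x else - x) i = 0.
  by rewrite !big_cons big_nil /= eqxx eq_sym (negbTE nkl) addr0 subrr.
by have := dsum u hd hs (mem_head _ _); rewrite /= eqxx.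
Qed.

Definition DecSpec (P : int -> Prop) x (s : seq int) (f : int -> car K V) :=
  [/\ uniq s, (forall k, k \in s -> P k /\ dg k (f k)),
      (forall k, k \notin s -> f k = 0) & x = \sum_(k <- s) f k].

Lemma in_degs_norm P x : in_degs K V P x -> exists s f, DecSpec P x s f.
Proof.
case=> s0 [f0 [hf ->]].
elim: s0 hf => [|i s0 IH] hf.
  by exists [::], (fun _ => 0); split => //; rewrite !big_nil.
have [|s [f [us hs hz ex]]] := IH.
  by move=> k hk; apply: hf; rewrite in_cons hk orbT.
have [Pi di] : P i /\ dg i (f0 i) by apply: hf; rewrite mem_head.
pose g := fun k => if k == i then f0 i else 0.
have sg : forall t, uniq t -> i \in t -> \sum_(k <- t) g k = f0 i.
  move=> t ut it; rewrite (@sum_supp _ g t [:: i]) //.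
  - by rewrite big_cons big_nil /g eqxx addr0.
  - by move=> k; rewrite /g; case: eqP => // ->; rewrite it.
  - by move=> k; rewrite inE /g; case: eqP.
have gd : forall k, dg k (g k) by move=> k; rewrite /g; case: eqP => [->|_]; [exact: di | exact: deg0].
case his: (i \in s).
- exists s, (fun k => f k + g k); split => //.
  + by move=> k hk; case: (hs k hk) => Pk dk; split => //; apply: degD.
  + move=> k hk; rewrite hz // /g; case: eqP => [ek|_]; last by rewrite addr0.
    by move: hk; rewrite ek his.
  + by rewrite big_cons ex big_split /= sg // addrC.
- exists (i :: s), (fun k => f k + g k); split => //.
  + by rewrite /= his.
  + move=> k; rewrite in_cons; case: (eqVneq k i) => [-> _|nki] /=.
      by split => //; rewrite hz ?his // add0r.
    by move=> hk; case: (hs k hk) => Pk dk; split => //; apply: degD.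
  + move=> k; rewrite in_cons negb_or => /andP[nki nks].
    by rewrite hz // /g (negbTE nki) addr0.
  + rewrite big_cons ex big_split /= sg ?mem_head //=; last by rewrite his.
    by rewrite big_cons hz ?his // add0r addrC.
Qed.

End Graded.



Section Comp.
Variable K : fieldType.
Variable V : GLSA K.
Hypothesis HV : is_GLSA K V.

Local Notation dg := (deg K V).
Local Notation br := (br K V).
Local Notation DS := (@DecSpec K V).

Definition dec (x : car K V) : seq int * (int -> car K V) :=
  epsd ([::], fun _ => 0) (fun p => DS (fun _ => True) x p.1 p.2).
Definition supp x := (dec x).1.
Definition cmp k x := (dec x).2 k.

Lemma cmpP x : DS (fun _ => True) x (supp x) (fun k => cmp k x).
Proof.
rewrite /supp /cmp /dec; apply: (@epsdP _ _ (fun p => DS (fun _ => True) x p.1 p.2)).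
by have [s [f h]] := in_degs_norm HV (decompV HV x); exists (s, f).
Qed.

Lemma dec_uniq P Q x s f t g : DS P x s f -> DS Q x t g -> forall k, f k = g k.
Proof.
case=> us hs zs ex [ut ht zt ext] k.
pose u := undup (s ++ t).
have uu : uniq u by apply: undup_uniq.
have hsum : \sum_(i <- u) (f i - g i) = 0.
  rewrite sumrB (@sum_supp _ f u s) ?(@sum_supp _ g u t) // -?ex -?ext ?subrr //.
  - by move=> i hi; apply: zt; move: hi; apply: contra; rewrite mem_undup mem_cat orbC => ->.
  - by move=> i hi; apply: zs; move: hi; apply: contra; rewrite mem_undup mem_cat => ->.
have hd : forall i, i \in u -> dg i (f i - g i).
  move=> i _; apply: (degB HV).
  + case: (boolP (i \in s)) => his; first by case: (hs i his).
    by rewrite zs //; apply: (deg0 HV).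
  + case: (boolP (i \in t)) => hit; first by case: (ht i hit).
    by rewrite zt //; apply: (deg0 HV).
case: (boolP (k \in u)) => ku.
  by apply/eqP; rewrite -subr_eq0; apply/eqP; apply: (dsum HV uu hd hsum).
by rewrite zs ?zt //; move: ku; apply: contra; rewrite mem_undup mem_cat => ->; rewrite ?orbT.
Qed.

Lemma cmp_spec P x s f k : DS P x s f -> cmp k x = f k.
Proof. by move=> h; apply: (dec_uniq (cmpP x) h). Qed.

Lemma cmp_weak x (s : seq int) (f : int -> car K V) k : uniq s ->
  (forall i, i \in s -> dg i (f i)) -> x = \sum_(i <- s) f i ->
  cmp k x = if k \in s then f k else 0.
Proof.
move=> us hs ex; apply: (@cmp_spec (fun _ => True) x s (fun i => if i \in s then f i else 0)).
split => //.
- by move=> i hi; rewrite hi; split => //; apply: hs.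
- by move=> i /negbTE ->.
- by rewrite ex; apply: eq_big_seq => i ->.
Qed.

Lemma cmp_deg k x : dg k (cmp k x).
Proof.
case: (cmpP x) => _ hs zs _; case: (boolP (k \in supp x)) => hk; first by case: (hs k hk).
by rewrite zs //; apply: (deg0 HV).
Qed.

Lemma supp_uniq x : uniq (supp x).
Proof. by case: (cmpP x). Qed.
Lemma cmp_supp x k : k \notin supp x -> cmp k x = 0.
Proof. by case: (cmpP x) => _ _ h _; apply: h. Qed.
Lemma expand x : x = \sum_(k <- supp x) cmp k x.
Proof. by case: (cmpP x). Qed.
Lemma expand_gen x (s : seq int) : uniq s -> (forall k, k \notin s -> cmp k x = 0) ->
  x = \sum_(k <- s) cmp k x.
Proof.
by move=> us hs; rewrite {1}[x]expand; apply: sum_supp => //;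
  [apply: supp_uniq | apply: cmp_supp].
Qed.

Lemma cmp_hom k x l : dg k x -> cmp l x = if l == k then x else 0.
Proof.
move=> hx; rewrite (@cmp_weak x [:: k] (fun _ => x)) //.
- by rewrite inE.
- by move=> i; rewrite inE => /eqP ->.
- by rewrite big_cons big_nil addr0.
Qed.

Lemma cmp_homE k x : dg k x -> cmp k x = x.
Proof. by move=> hx; rewrite (cmp_hom k hx) eqxx. Qed.
Lemma cmp_homN k x l : dg k x -> l != k -> cmp l x = 0.
Proof. by move=> hx nlk; rewrite (cmp_hom l hx) (negbTE nlk). Qed.

Lemma cmp0 k : cmp k 0 = 0.
Proof. by rewrite (cmp_hom k (deg0 HV 0)); case: eqP. Qed.

Lemma cmp_lin k a x y : cmp k (a *: x + y) = a *: cmp k x + cmp k y.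
Proof.
pose u := undup (supp x ++ supp y).
have uu : uniq u by apply: undup_uniq.
rewrite (@cmp_weak _ u (fun i => a *: cmp i x + cmp i y)) //.
- case: ifP => // ku; rewrite !cmp_supp ?scaler0 ?addr0 //.
  + by move: ku; apply: contraFN; rewrite mem_undup mem_cat => ->; rewrite orbT.
  + by move: ku; apply: contraFN; rewrite mem_undup mem_cat => ->.
- by move=> i _; apply: (degDZ HV) => //; apply: cmp_deg.
- rewrite big_split /= -scaler_sumr -!expand_gen //.
  + by move=> i hi; apply: cmp_supp; move: hi; apply: contra; rewrite mem_undup mem_cat => ->; rewrite orbT.
  + by move=> i hi; apply: cmp_supp; move: hi; apply: contra; rewrite mem_undup mem_cat => ->.
Qed.

Lemma cmpD k x y : cmp k (x + y) = cmp k x + cmp k y.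
Proof. by have := cmp_lin k 1 x y; rewrite !scale1r. Qed.
Lemma cmpZ k a x : cmp k (a *: x) = a *: cmp k x.
Proof. by have := cmp_lin k a x 0; rewrite !addr0 cmp0 addr0. Qed.
Lemma cmpN k x : cmp k (- x) = - cmp k x.
Proof. by rewrite -scaleN1r cmpZ scaleN1r. Qed.
Lemma cmpB k x y : cmp k (x - y) = cmp k x - cmp k y.
Proof. by rewrite cmpD cmpN. Qed.
Lemma cmp_sum k (I : Type) (r : seq I) (F : I -> car K V) :
  cmp k (\sum_(i <- r) F i) = \sum_(i <- r) cmp k (F i).
Proof.
elim: r => [|i r IH]; first by rewrite !big_nil cmp0.
by rewrite !big_cons cmpD IH.
Qed.

Lemma in_degsP (P : int -> Prop) x :
  in_degs K V P x <-> (forall k, ~ P k -> cmp k x = 0).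
Proof.
split.
  move=> /(in_degs_norm HV) [s [f h]] k nPk; rewrite (cmp_spec k h).
  case: h => _ hs zs _; apply: zs; apply/negP => /hs [] //.
move=> h; exists [seq k <- supp x | `[< P k >]], (fun k => cmp k x); split.
  move=> k; rewrite mem_filter => /andP [/asboolP Pk _]; split => //; exact: cmp_deg.
rewrite big_filter [RHS]big_mkcond /= {1}[x]expand; apply: eq_bigr => k _.
by case: asboolP => // /h.
Qed.

Definition plusV := plus_part K V.
Lemma plusP x : plusV x <-> (forall k, k <= 0 -> cmp k x = 0).
Proof.
rewrite /plusV /plus_part in_degsP; split=> h k hk; apply: h.
- by rewrite ltNge hk.
- by rewrite leNgt; apply/negP.
Qed.

Lemma plus0 : plusV 0.
Proof. by apply/plusP => k _; rewrite cmp0. Qed.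
Lemma plus_lin a x y : plusV x -> plusV y -> plusV (a *: x + y).
Proof. by move=> /plusP hx /plusP hy; apply/plusP => k hk; rewrite cmp_lin hx ?hy ?scaler0 ?addr0. Qed.
Lemma plusD x y : plusV x -> plusV y -> plusV (x + y).
Proof. by move=> hx hy; have := plus_lin 1 hx hy; rewrite scale1r. Qed.
Lemma plusZ a x : plusV x -> plusV (a *: x).
Proof. by move=> hx; have := plus_lin a hx plus0; rewrite addr0. Qed.
Lemma plusB x y : plusV x -> plusV y -> plusV (x - y).
Proof. by move=> hx hy; apply: plusD => //; rewrite -scaleN1r; apply: plusZ. Qed.
Lemma plus_sum (I : eqType) (r : seq I) F :
  (forall i, i \in r -> plusV (F i)) -> plusV (\sum_(i <- r) F i).
Proof.
elim: r => [|i r IH] h; first by rewrite big_nil; apply: plus0.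
by rewrite big_cons; apply: plusD; [apply: h; rewrite mem_head|
  apply: IH => j hj; apply: h; rewrite in_cons hj orbT].
Qed.
Lemma plus_hom k x : 0 < k -> dg k x -> plusV x.
Proof.
move=> hk hx; apply/plusP => l hl; apply: (cmp_homN hx).
by apply: contraTN hl => /eqP ->; rewrite -ltNge.
Qed.

Lemma plus_hom0 k x : plusV x -> dg k x -> k <= 0 -> x = 0.
Proof. by move=> /plusP h hx hk; rewrite -(cmp_homE hx); apply: h. Qed.

Lemma cmp_br m x y :
  cmp m (br x y) = \sum_(a <- supp x) br (cmp a x) (cmp (m - a) y).
Proof.
rewrite {1}[x]expand (br_suml HV) cmp_sum; apply: eq_bigr => a _.
rewrite {1}[y]expand (br_sumr HV) cmp_sum.
rewrite (@sum_supp _ (fun b => cmp m (br (cmp a x) (cmp b y))) (supp y) [:: m - a]) //.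
- rewrite big_cons big_nil addr0 (cmp_homE (k := m)) //.
  have e : m = a + (m - a) by rewrite addrC subrK.
  by rewrite {1}e; apply: (brdeg HV); apply: cmp_deg.
- by apply: supp_uniq.
- by move=> k hk; rewrite (cmp_supp hk) (br0r HV) cmp0.
- move=> k; rewrite inE => nk; apply: (cmp_homN (k := a + k)).
    by apply: (brdeg HV); apply: cmp_deg.
  by apply: contra nk => /eqP ->; rewrite addrC addKr.
Qed.

Lemma plus_br x y : plusV x -> plusV y -> plusV (br x y).
Proof.
move=> /plusP px /plusP py; rewrite [x]expand [y]expand (br_suml HV).
apply: plus_sum => a _; rewrite (br_sumr HV); apply: plus_sum => b _.
case: (leP a 0) => ha; first by rewrite px // (br0l HV); apply: plus0.
case: (leP b 0) => hb; first by rewrite py // (br0r HV); apply: plus0.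
by apply: (@plus_hom (a + b)); [apply: addr_gt0 | apply: (brdeg HV); apply: cmp_deg].
Qed.

Definition GenV := forall S : car K V -> Prop,
  S 0 -> (forall (a : K) x y, S x -> S y -> S (a *: x + y)) ->
  (forall x y, S x -> S y -> S (br x y)) ->
  (forall x, dg 1 x -> S x) -> forall y, plusV y -> S y.

Lemma hom_gen (Gen : GenV) (Th : int -> car K V -> Prop)
  (Th0 : forall l, 0 < l -> Th l 0)
  (ThL : forall l a v w, 0 < l -> dg l v -> dg l w -> Th l v -> Th l w -> Th l (a *: v + w))
  (ThB : forall a b v w, 0 < a -> 0 < b -> dg a v -> dg b w -> Th a v -> Th b w ->
     Th (a + b) (br v w))
  (Th1 : forall u, dg 1 u -> Th 1 u) :
  forall l v, 0 < l -> dg l v -> Th l v.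
Proof.
have ThS : forall l (I : eqType) (r : seq I) F, 0 < l ->
    (forall i, i \in r -> dg l (F i) /\ Th l (F i)) -> Th l (\sum_(i <- r) F i).
  move=> l I r F hl; elim: r => [|i r IH] h; first by rewrite big_nil; apply: Th0.
  have [d1 t1] := h i (mem_head _ _).
  have h' : forall j, j \in r -> dg l (F j) /\ Th l (F j).
    by move=> j hj; apply: h; rewrite in_cons hj orbT.
  rewrite big_cons -[F i]scale1r; apply: ThL => //; last by apply: IH.
  by apply: (deg_sum HV) => j hj; case: (h' j hj).
pose S y := plusV y /\ forall l, 0 < l -> Th l (cmp l y).
have HS : forall y, plusV y -> S y.
  apply: Gen.
  - by split; [apply: plus0 | move=> l hl; rewrite cmp0; apply: Th0].
  - move=> a x y [px hx] [py hy]; split; first by apply: plus_lin.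
    by move=> l hl; rewrite cmp_lin; apply: ThL => //; try apply: cmp_deg; auto.
  - move=> x y [px hx] [py hy]; split; first by apply: plus_br.
    move=> l hl; rewrite cmp_br; apply: ThS => // a _.
    have e : l = a + (l - a) by rewrite addrC subrK.
    split; first by rewrite {1}e; apply: (brdeg HV); apply: cmp_deg.
    case: (leP a 0) => ha; first by rewrite ((plusP _).1 px a ha) (br0l HV); apply: Th0.
    case: (leP (l - a) 0) => hb; first by rewrite ((plusP _).1 py _ hb) (br0r HV); apply: Th0.
    by rewrite {1}e; apply: ThB => //; try apply: cmp_deg; auto.
  - move=> x hx; split; first by apply: (@plus_hom 1).
    move=> l hl; rewrite (cmp_hom l hx); case: eqP => [->|_]; [exact: Th1|exact: Th0].
move=> l v hl hv; have [_ /(_ l hl)] := HS v (plus_hom hl hv).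
by rewrite cmp_homE.
Qed.

End Comp.



Section SubGLSA.
Variable K : fieldType.
Variable U : GLSA K.
Hypothesis HU : is_GLSA K U.
Variable P : car K U -> Prop.
Hypothesis P0 : P 0.
Hypothesis PL : forall (a : K) x y, P x -> P y -> P (a *: x + y).
Hypothesis PB : forall x y, P x -> P y -> P (br K U x y).
Hypothesis Pcmp : forall k x, P x -> P (cmp k x).

Definition Pb : pred (car K U) := fun x => `[< P x >].

Lemma Pb_closed : submod_closed Pb.
Proof.
split; first by apply/asboolP.
by move=> a x y /asboolP hx /asboolP hy; apply/asboolP; apply: PL.
Qed.

HB.instance Definition _ := GRing.isSubmodClosed.Build K (car K U) Pb Pb_closed.

Record subT := SubT { sval : car K U; sprop : Pb sval }.
HB.instance Definition _ := [isSub for sval].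
HB.instance Definition _ := [Choice of subT by <:].
HB.instance Definition _ := [SubChoice_isSubLmodule of subT by <:].

Lemma svalDZ (a : K) (x y : subT) : sval (a *: x + y) = a *: sval x + sval y.
Proof. by []. Qed.
Lemma sval0 : sval (0 : subT) = 0.
Proof. by []. Qed.
Lemma svalD (x y : subT) : sval (x + y) = sval x + sval y.
Proof. by []. Qed.
Lemma svalZ (a : K) (x : subT) : sval (a *: x) = a *: sval x.
Proof. by []. Qed.
Lemma svalN (x : subT) : sval (- x) = - sval x.
Proof. by []. Qed.
Lemma sval_sum (I : Type) (r : seq I) (F : I -> subT) :
  sval (\sum_(i <- r) F i) = \sum_(i <- r) sval (F i).
Proof.
elim: r => [|i r IH]; first by rewrite !big_nil.
by rewrite !big_cons svalD IH.
Qed.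
Lemma sval_inj : injective sval.
Proof. exact: val_inj. Qed.

Lemma brS_proof (x y : subT) : Pb (br K U (sval x) (sval y)).
Proof. by apply/asboolP; apply: PB; apply/asboolP; apply: sprop. Qed.
Definition brS (x y : subT) : subT := SubT (brS_proof x y).

Definition Lsub : GLSA K :=
  @Build_GLSA K (subT : lmodType K) (fun k w => deg K U k (sval w)) brS.

Lemma cmpS_proof k (w : subT) : Pb (cmp k (sval w)).
Proof. by apply/asboolP; apply: Pcmp; apply/asboolP; apply: sprop. Qed.

Lemma Lsub_GLSA : is_GLSA K Lsub.
Proof.
split; [|split; [|split; [|split; [|split; [|split; [|split]]]]]] => /=.
- move=> k; split; first by exact: (deg0 HU k).
  by move=> a x y hx hy; exact: (degDZ HU a hx hy).
- move=> w; exists (supp (sval w)), (fun k => SubT (cmpS_proof k w)); split => //.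
  by move=> k _; split => //=; apply: cmp_deg.
  by apply: sval_inj; rewrite sval_sum /=; apply: expand.
- move=> s f us hs /(congr1 sval); rewrite sval_sum sval0 => hsum k hk.
  by apply: sval_inj; rewrite sval0; apply: (dsum HU us hs hsum).
- by move=> a x y z; apply: sval_inj; exact: (brDZl HU).
- by move=> a x y z; apply: sval_inj; exact: (brDZr HU).
- by move=> i j x y hx hy; apply: (brdeg HU).
- by move=> i j x y hx hy; apply: sval_inj; exact: (antisym HU hx hy).
- by move=> i j x y z hx hy; apply: sval_inj; have := jacobi HU (sval z) hx hy; exact.
Qed.

End SubGLSA.

Section GenU.
Variable K : fieldType.
Variable U : GLSA K.
Hypothesis HU : is_GLSA K U.
Hypothesis Hfree : plus_free_on_deg1 K U.

Lemma id_morph : morph_on K (plus_part K U) (fun x : car K U => x).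
Proof. by split. Qed.

Lemma GenU : @GenV K U.
Proof.
move=> S S0 SL SB S1.
have SD : forall x y, S x -> S y -> S (x + y).
  by move=> x y hx hy; have := SL 1 x y hx hy; rewrite scale1r.
have Ssum : forall (I : Type) (r : seq I) F, (forall i, S (F i)) -> S (\sum_(i <- r) F i).
  move=> I r F h; elim: r => [|i r IH]; first by rewrite big_nil.
  by rewrite big_cons; apply: SD.
pose S' y := plusV y /\ forall l, S (cmp l y).
have S'0 : S' 0 by split; [apply: (plus0 HU) | move=> l; rewrite (cmp0 HU)].
have S'L : forall (a : K) x y, S' x -> S' y -> S' (a *: x + y).
  move=> a x y [px hx] [py hy]; split; first by apply: plus_lin.
  by move=> l; rewrite cmp_lin //; apply: SL.
have S'B : forall x y, S' x -> S' y -> S' (br K U x y).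
  move=> x y [px hx] [py hy]; split; first by apply: plus_br.
  by move=> l; rewrite cmp_br //; apply: Ssum => a; apply: SB.
have S'cmp : forall k x, S' x -> S' (cmp k x).
  move=> k x [px hx]; split.
    case: (leP k 0) => hk; first by rewrite ((plusP HU _).1 px k hk); apply: (plus0 HU).
    by apply: (plus_hom HU hk); apply: cmp_deg.
  by move=> l; rewrite (cmp_hom HU l (cmp_deg HU k x)); case: eqP => _; [apply: hx | exact: S0].
have S'1 : forall u, deg K U 1 u -> S' u.
  move=> u hu; split; first by apply: (plus_hom HU _ hu).
  by move=> l; rewrite (cmp_hom HU l hu); case: eqP => _; [apply: S1 | exact: S0].
pose L := Lsub S'0 S'L S'B.
have HL : is_GLSA K L by apply: (Lsub_GLSA HU S'0 S'L S'B S'cmp).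
pose f := fun u : car K U => match pselect (deg K U 1 u) with
  | left h => @SubT K U S' u (introT (asboolP _) (S'1 u h)) : car K L
  | right _ => 0 end.
have fE : forall u, deg K U 1 u -> sval (f u) = u.
  by move=> u hu; rewrite /f; case: pselect.
have flin : forall (a : K) u v, deg K U 1 u -> deg K U 1 v -> f (a *: u + v) = a *: f u + f v.
  move=> a u v hu hv; apply: sval_inj; rewrite svalDZ !fE //; exact: (degDZ HU).
have fdeg : forall u, deg K U 1 u -> deg K L 1 (f u).
  by move=> u hu; rewrite /= fE.
have [F [[FL [FD FB]] F1]] := (Hfree HL).1 f flin fdeg.
have mH : morph_on K (plus_part K U) (fun x => sval (F x)).
  split; first by move=> a x y hx hy; rewrite FL.
  split; first by move=> k x hx hk; apply: (FD k x hx hk).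
  by move=> x y hx hy; rewrite FB.
have := (Hfree HU).2 _ _ mH id_morph.
move=> huniq y py.
have eH : sval (F y) = y.
  by apply: huniq => // u hu; rewrite F1 // fE.
have : S' y by rewrite -eH; apply/asboolP; apply: sprop.
by case=> _ hS; rewrite [y](expand HU); apply: Ssum.
Qed.

End GenU.



Section Main.
Variable K : fieldType.
Variables G U : GLSA K.
Variable j : car K G -> car K U.
Variable pi : car K U -> car K G.
Hypothesis HG : is_GLSA K G.
Hypothesis Htrans : pos_0_transitive K G.
Hypothesis Hgen : plus_generated_by_deg1 K G.
Hypothesis HUn : universal_LSA_of K G U j.
Hypothesis Hpi : canonical_proj K G U j pi.

Local Notation dG := (deg K G).
Local Notation dU := (deg K U).
Local Notation bG := (br K G).
Local Notation bU := (br K U).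
Local Notation plusU := (@plusV K U).
Local Notation plusG := (@plusV K G).
Local Notation D := (Dker K pi).

Lemma HU : is_GLSA K U. Proof. by case: HUn. Qed.
Lemma jlin a g h : dG 1 g -> dG 1 h -> j (a *: g + h) = a *: j g + j h.
Proof. by case: HUn => _ [h1 _]; apply: h1. Qed.
Lemma jdeg g : dG 1 g -> dU 1 (j g).
Proof. by case: HUn => _ [_ [h1 _]]; apply: h1. Qed.
Lemma jinj g h : dG 1 g -> dG 1 h -> j g = j h -> g = h.
Proof. by case: HUn => _ [_ [_ [h1 _]]]; apply: h1. Qed.
Lemma jsurj u : dU 1 u -> exists2 g, dG 1 g & j g = u.
Proof. by case: HUn => _ [_ [_ [_ [h1 _]]]]; apply: h1. Qed.
Lemma Uneg_inj k x : k <= 0 -> dU k x -> (forall u, dU 1 u -> bU x u = 0) -> x = 0.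
Proof. by case: HUn => _ [_ [_ [_ [_ [h1 _]]]]] hk; case: (h1 k hk) => h2 _; apply: h2. Qed.
Lemma Uneg_surj k (phi : car K U -> car K U) : k <= 0 ->
  (forall (a : K) u v, dU 1 u -> dU 1 v -> phi (a *: u + v) = a *: phi u + phi v) ->
  (forall u, dU 1 u -> dU (k + 1) (phi u)) ->
  exists2 x, dU k x & forall u, dU 1 u -> bU x u = phi u.
Proof. by case: HUn => _ [_ [_ [_ [_ [h1 _]]]]] hk; case: (h1 k hk) => _ h2; apply: h2. Qed.
Lemma Hfree : plus_free_on_deg1 K U.
Proof. by case: HUn => _ [_ [_ [_ [_ [_ h1]]]]]. Qed.

Lemma piL a x y : plusU x -> plusU y -> pi (a *: x + y) = a *: pi x + pi y.
Proof. by case: Hpi => [[h1 _] _]; apply: h1. Qed.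
Lemma pideg k x : plusU x -> dU k x -> dG k (pi x).
Proof. by case: Hpi => [[_ [h1 _]] _]; apply: h1. Qed.
Lemma pibr x y : plusU x -> plusU y -> pi (bU x y) = bG (pi x) (pi y).
Proof. by case: Hpi => [[_ [_ h1]] _]; apply: h1. Qed.
Lemma pij g : dG 1 g -> pi (j g) = g.
Proof. by case: Hpi => _ h1; apply: h1. Qed.

Lemma j0 : j 0 = 0.
Proof.
have := jlin 1 (deg0 HG 1) (deg0 HG 1); rewrite !scale1r addr0 => h.
by apply: (addrI (j 0)); rewrite addr0 -h.
Qed.
Lemma pi0 : pi 0 = 0.
Proof.
have := piL 1 (plus0 HU) (plus0 HU); rewrite !scale1r addr0 => h.
by apply: (addrI (pi 0)); rewrite addr0 -h.
Qed.
Lemma piD x y : plusU x -> plusU y -> pi (x + y) = pi x + pi y.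
Proof. by move=> hx hy; have := piL 1 hx hy; rewrite !scale1r. Qed.
Lemma piZ a x : plusU x -> pi (a *: x) = a *: pi x.
Proof. by move=> hx; have := piL a hx (plus0 HU); rewrite !addr0 pi0 addr0. Qed.
Lemma piN x : plusU x -> pi (- x) = - pi x.
Proof. by move=> hx; rewrite -scaleN1r piZ // scaleN1r. Qed.
Lemma piB x y : plusU x -> plusU y -> pi (x - y) = pi x - pi y.
Proof.
move=> hx hy; have hny : plusU (- y) by rewrite -scaleN1r; apply: (plusZ HU).
by rewrite piD // piN.
Qed.
Lemma pi_sum (I : eqType) (r : seq I) F : (forall i, i \in r -> plusU (F i)) ->
  pi (\sum_(i <- r) F i) = \sum_(i <- r) pi (F i).
Proof.
elim: r => [|i r IH] h; first by rewrite !big_nil pi0.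
have h' : forall k, k \in r -> plusU (F k) by move=> k hk; apply: h; rewrite in_cons hk orbT.
rewrite !big_cons piD ?IH //; first by apply: h; rewrite mem_head.
by apply: (plus_sum HU).
Qed.

Lemma plus_cmpU k y : plusU y -> plusU (cmp k y).
Proof.
move=> py; case: (leP k 0) => hk; first by rewrite ((plusP HU _).1 py k hk); apply: (plus0 HU).
by apply: (plus_hom HU hk); exact: (cmp_deg HU).
Qed.

Lemma pi_cmp k y : plusU y -> pi (cmp k y) = cmp k (pi y).
Proof.
move=> py.
have e : pi y = \sum_(l <- supp y) pi (cmp l y).
  by rewrite {1}[y](expand HU) pi_sum // => l _; apply: plus_cmpU.
rewrite (cmp_weak HG (s := supp y) (f := fun l => pi (cmp l y))) //.
- by case: ifP => // /negbT hk; rewrite (cmp_supp HU hk) pi0.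
- by apply: (supp_uniq HU).
- by move=> i _; apply: pideg; [apply: plus_cmpU | exact: (cmp_deg HU)].
Qed.

Lemma plus_pi y : plusU y -> plusG (pi y).
Proof.
move=> py; apply/(plusP HG) => k hk.
by rewrite -pi_cmp // ((plusP HU _).1 py k hk) pi0.
Qed.

Lemma D0 : D 0.
Proof. by split; [apply: (plus0 HU) | apply: pi0]. Qed.
Lemma DL a x y : D x -> D y -> D (a *: x + y).
Proof.
move=> [px hx] [py hy]; split; first by apply: (plus_lin HU).
by rewrite piL // hx hy scaler0 addr0.
Qed.
Lemma DD x y : D x -> D y -> D (x + y).
Proof. by move=> hx hy; have := DL 1 hx hy; rewrite scale1r. Qed.
Lemma DZ a x : D x -> D (a *: x).
Proof. by move=> hx; have := DL a hx D0; rewrite addr0. Qed.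
Lemma DN x : D x -> D (- x).
Proof. by move=> hx; rewrite -scaleN1r; apply: DZ. Qed.
Lemma DNr x : D (- x) -> D x.
Proof. by move=> /DN; rewrite opprK. Qed.
Lemma DB x y : D x -> D y -> D (x - y).
Proof. by move=> hx hy; apply: DD => //; apply: DN. Qed.
Lemma Dtrans x y z : D (x - y) -> D (y - z) -> D (x - z).
Proof. by move=> h1 h2; have := DD h1 h2; rewrite addrA subrK. Qed.
Lemma Dsum (I : eqType) (r : seq I) F : (forall i, i \in r -> D (F i)) -> D (\sum_(i <- r) F i).
Proof.
elim: r => [|i r IH] h; first by rewrite big_nil; apply: D0.
by rewrite big_cons; apply: DD; [apply: h; rewrite mem_head|
  apply: IH => k hk; apply: h; rewrite in_cons hk orbT].
Qed.
Lemma Dcmp k y : D y -> D (cmp k y).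
Proof.
move=> [py hy]; split; first by apply: plus_cmpU.
by rewrite pi_cmp // hy (cmp0 HG).
Qed.
Lemma Dlow k y : dU k y -> k <= 1 -> D y -> y = 0.
Proof.
move=> hy hk [py piy]; case: (leP k 0) => hk0; first by apply: (plus_hom0 HU py hy).
have ek : k = 1 by apply/eqP; rewrite eq_le hk /=.
move: hy; rewrite ek => hy; have [g dg eg] := jsurj hy.
by move: piy; rewrite -eg pij // => ->; rewrite j0.
Qed.
Lemma Dbrl x y : plusU x -> D y -> D (bU x y).
Proof.
move=> px [py hy]; split; first by apply: (plus_br HU).
by rewrite pibr // hy (br0r HG).
Qed.
Lemma Dbrr x y : plusU x -> D y -> D (bU y x).
Proof.
move=> px [py hy]; split; first by apply: (plus_br HU).
by rewrite pibr // hy (br0l HG).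
Qed.

Lemma pi_surj_plus g : plusG g -> exists y, plusU y /\ pi y = g.
Proof.
move=> hg; pose S := fun g : car K G => (exists y : car K U, plusU y /\ pi y = g).
have := @Hgen S.
move=> /(_ _ _ _ _ g hg); apply.
- by exists 0; split; [apply: (plus0 HU) | apply: pi0].
- move=> a x y [x' [px ex]] [y' [py ey]]; exists (a *: x' + y'); split.
    by apply: (plus_lin HU).
  by rewrite piL // ex ey.
- move=> x y [x' [px ex]] [y' [py ey]]; exists (bU x' y'); split.
    by apply: (plus_br HU).
  by rewrite pibr // ex ey.
- move=> x hx; exists (j x); split; last by apply: pij.
  by apply: (plus_hom HU _ (jdeg hx)).
Qed.

Lemma pi_surj k g : 0 < k -> dG k g -> exists y, dU k y /\ pi y = g.
Proof.
move=> hk hg; have [y [py ey]] := pi_surj_plus (plus_hom HG hk hg).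
exists (cmp k y); split; first by exact: (cmp_deg HU).
by rewrite pi_cmp // ey (cmp_homE HG hg).
Qed.


Definition jinv (u : car K U) : car K G := epsd 0 (fun g => dG 1 g /\ j g = u).
Lemma jinvP u : dU 1 u -> dG 1 (jinv u) /\ j (jinv u) = u.
Proof.
move=> hu; apply: (@epsdP _ _ (fun g => dG 1 g /\ j g = u)).
by have [g hg eg] := jsurj hu; exists g.
Qed.
Lemma jinv_j g : dG 1 g -> jinv (j g) = g.
Proof.
move=> hg; have [h1 h2] := jinvP (jdeg hg); by apply: jinj.
Qed.

Fixpoint lift (n : nat) (g : car K G) : car K U :=
  match n with
  | 0%N => j g
  | n'.+1 => epsd 0 (fun x => dU (- n'%:Z) x /\
               forall h, dG 1 h -> bU x (j h) = lift n' (bG g h))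
  end.

Definition LiftSpec n :=
  (forall g, dG (1 - n%:Z) g -> dU (1 - n%:Z) (lift n g)) /\
  (forall a g h, dG (1 - n%:Z) g -> dG (1 - n%:Z) h ->
     lift n (a *: g + h) = a *: lift n g + lift n h).

Lemma lift_exists n g : LiftSpec n -> dG (- n%:Z) g ->
  exists x, dU (- n%:Z) x /\ forall h, dG 1 h -> bU x (j h) = lift n (bG g h).
Proof.
move=> [Ld LL] hg.
have e1 : - n%:Z + 1 = 1 - n%:Z by rewrite addrC.
have hb : forall h, dG 1 h -> dG (1 - n%:Z) (bG g h).
  by move=> h hh; rewrite -e1; apply: (brdeg HG).
have jinvL : forall (a : K) u v, dU 1 u -> dU 1 v -> jinv (a *: u + v) = a *: jinv u + jinv v.
  move=> a u v hu hv; have [du eu] := jinvP hu; have [dv ev] := jinvP hv.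
  have huv : dU 1 (a *: u + v) by apply: (degDZ HU).
  have [duv euv] := jinvP huv.
  apply: jinj => //; first by apply: (degDZ HG).
  by rewrite euv jlin // eu ev.
have c1 : - n%:Z <= 0 by rewrite oppr_le0.
have c2 : forall (a : K) u v, dU 1 u -> dU 1 v ->
    lift n (bG g (jinv (a *: u + v))) = a *: lift n (bG g (jinv u)) + lift n (bG g (jinv v)).
  move=> a u v hu hv; rewrite jinvL // (brDZr HG) LL //; apply: hb;
    by case: (jinvP hu); case: (jinvP hv).
have c3 : forall u, dU 1 u -> dU (- n%:Z + 1) (lift n (bG g (jinv u))).
  by move=> u hu; rewrite e1; apply: Ld; apply: hb; case: (jinvP hu).
have [x hx ex] := @Uneg_surj (- n%:Z) (fun u => lift n (bG g (jinv u))) c1 c2 c3.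
by exists x; split => // h hh; rewrite ex ?jinv_j //; apply: jdeg.
Qed.

Lemma lift_spec n : LiftSpec n.
Proof.
elim: n => [|n [Ld LL]].
  by split; [move=> g; rewrite subr0; apply: jdeg | move=> a g h hg hh; rewrite /= jlin].
have e : 1 - (n.+1)%:Z = - n%:Z by lia.
have P1 : forall g, dG (- n%:Z) g -> dU (- n%:Z) (lift n.+1 g) /\
    forall h, dG 1 h -> bU (lift n.+1 g) (j h) = lift n (bG g h).
  move=> g hg; apply: (@epsdP _ _ (fun x => dU (- n%:Z) x /\
               forall h, dG 1 h -> bU x (j h) = lift n (bG g h))).
  by apply: lift_exists.
have e1 : - n%:Z + 1 = 1 - n%:Z by rewrite addrC.
rewrite /LiftSpec e; split; first by move=> g /P1 [].
move=> a g h hg hh; apply/eqP; rewrite -subr_eq0; apply/eqP.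
apply: (@Uneg_inj (- n%:Z)); first by rewrite oppr_le0.
  apply: (degB HU); first by case: (P1 _ (degDZ HG a hg hh)).
  by apply: (degDZ HU); [case: (P1 _ hg) | case: (P1 _ hh)].
move=> u hu; have [h' dh' <-] := jsurj hu.
have hb : forall x, dG (- n%:Z) x -> dG (1 - n%:Z) (bG x h').
  by move=> x hx; rewrite -e1; apply: (brdeg HG).
rewrite (brBl HU) (brDZl HU).
rewrite (P1 _ (degDZ HG a hg hh)).2 // (P1 _ hg).2 // (P1 _ hh).2 //.
by rewrite (brDZl HG) LL ?subrr //; apply: hb.
Qed.

Lemma lift_br n g h : dG (- n%:Z) g -> dG 1 h -> bU (lift n.+1 g) (j h) = lift n (bG g h).
Proof.
move=> hg hh.
have P1 : dU (- n%:Z) (lift n.+1 g) /\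
    forall h, dG 1 h -> bU (lift n.+1 g) (j h) = lift n (bG g h).
  apply: (@epsdP _ _ (fun x => dU (- n%:Z) x /\
               forall h, dG 1 h -> bU x (j h) = lift n (bG g h))).
  by apply: lift_exists => //; apply: lift_spec.
by apply: P1.2.
Qed.

Definition psih (k : int) (g : car K G) : car K U :=
  if k <= 1 then lift (absz (1 - k)%R) g
  else if g == 0 then 0 else epsd 0 (fun y => dU k y /\ pi y = g).

Lemma psih_low k g : k <= 1 -> psih k g = lift (absz (1 - k)%R) g.
Proof. by rewrite /psih => ->. Qed.

Lemma psih_high k g : 1 < k -> dG k g -> dU k (psih k g) /\ pi (psih k g) = g.
Proof.
move=> hk hg; rewrite ltNge in hk; rewrite /psih (negbTE hk).
case: eqP => [->|_]; first by split; [apply: (deg0 HU) | apply: pi0].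
apply: (@epsdP _ _ (fun y => dU k y /\ pi y = g)).
by apply: pi_surj => //; rewrite ltNge; apply: contra hk => h; apply: (le_trans h).
Qed.

Lemma psih_deg k g : dG k g -> dU k (psih k g).
Proof.
move=> hg; case: (leP k 1) => hk; last by case: (psih_high hk hg).
rewrite psih_low //; have e : k = 1 - (absz (1 - k)%R)%:Z by lia.
by have := (lift_spec (absz (1 - k)%R)).1 g; rewrite -e; apply.
Qed.

Lemma psih_lin k a g h : k <= 1 -> dG k g -> dG k h ->
  psih k (a *: g + h) = a *: psih k g + psih k h.
Proof.
move=> hk hg hh; rewrite !psih_low //; have e : k = 1 - (absz (1 - k)%R)%:Z by lia.
by have := (lift_spec (absz (1 - k)%R)).2 a g h; rewrite -e; apply.
Qed.

Lemma psih0 k : psih k 0 = 0.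
Proof.
case: (leP k 1) => hk; last by rewrite /psih leNgt hk eqxx.
have := psih_lin 1 hk (deg0 HG k) (deg0 HG k); rewrite !scale1r addr0 => h.
by apply: (addrI (psih k 0)); rewrite addr0 -h.
Qed.

Lemma psih1 g : psih 1 g = j g.
Proof. by rewrite psih_low. Qed.

Lemma psih_pi k g : 1 <= k -> dG k g -> pi (psih k g) = g.
Proof.
move=> hk hg; case: (leP k 1) => hk1; last by case: (psih_high hk1 hg).
have ek : k = 1 by apply/eqP; rewrite eq_le hk hk1.
by move: hg; rewrite ek => hg; rewrite psih1 pij.
Qed.

Lemma psih_plus k g : 1 <= k -> dG k g -> plusU (psih k g).
Proof.
move=> hk hg; apply: (plus_hom HU (k := k)); last by apply: psih_deg.
by apply: (lt_le_trans _ hk).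
Qed.

Lemma psih_br1 k g h : k <= 0 -> dG k g -> dG 1 h ->
  bU (psih k g) (j h) = psih (k + 1) (bG g h).
Proof.
move=> hk hg hh; rewrite !psih_low; last by lia.
  have e1 : absz (1 - k)%R = (absz (1 - (k + 1))%R).+1 by lia.
  rewrite e1 lift_br //; have e2 : k = - (absz (1 - (k + 1))%R)%:Z by lia.
  by rewrite -e2.
by lia.
Qed.

Lemma psih_linD k a g h : dG k g -> dG k h ->
  D (psih k (a *: g + h) - (a *: psih k g + psih k h)).
Proof.
move=> hg hh; case: (leP k 1) => hk.
  by rewrite psih_lin // subrr; apply: D0.
have hgh : dG k (a *: g + h) by apply: (degDZ HG).
have [d1 p1] := psih_high hk hgh; have [d2 p2] := psih_high hk hg; have [d3 p3] := psih_high hk hh.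
have hk0 : 0 < k by apply: (lt_trans _ hk).
have pl : forall y, dU k y -> plusU y by move=> y hy; apply: (plus_hom HU hk0).
have q1 := pl _ d1; have q2 := pl _ d2; have q3 := pl _ d3.
have q23 : plusU (a *: psih k g + psih k h) by apply: (plus_lin HU).
split; first by apply: (plusB HU).
by rewrite piB // piL // p1 p2 p3 subrr.
Qed.


Definition Rep (m : int) (g : car K G) (y : car K U) : Prop :=
  if 1 < m then plusU y /\ pi y = g else y = psih m g.

Lemma RepH m g y : 1 < m -> Rep m g y <-> plusU y /\ pi y = g.
Proof. by rewrite /Rep => ->. Qed.
Lemma RepLo m g y : m <= 1 -> Rep m g y <-> y = psih m g.
Proof. by rewrite /Rep ltNge => ->. Qed.

Lemma Rep0 m : Rep m 0 0.
Proof.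
case: (leP m 1) => hm; first by apply/RepLo => //; rewrite psih0.
by apply/RepH => //; split; [apply: (plus0 HU) | apply: pi0].
Qed.

Lemma RepL m c g1 g2 y1 y2 : dG m g1 -> dG m g2 -> Rep m g1 y1 -> Rep m g2 y2 ->
  Rep m (c *: g1 + g2) (c *: y1 + y2).
Proof.
move=> h1 h2; case: (leP m 1) => hm.
  by move=> /(RepLo _ _ hm) -> /(RepLo _ _ hm) ->; apply/RepLo => //; rewrite psih_lin.
move=> /(RepH _ _ hm) [p1 e1] /(RepH _ _ hm) [p2 e2]; apply/RepH => //; split.
  by apply: (plus_lin HU).
by rewrite piL // e1 e2.
Qed.

Lemma RepZ m c g y : dG m g -> Rep m g y -> Rep m (c *: g) (c *: y).
Proof.
by move=> hg hr; have := RepL c hg (deg0 HG m) hr (Rep0 m); rewrite !addr0.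
Qed.

Lemma RepDk m g y : dG m g -> Rep m g y -> D (psih m g - y).
Proof.
move=> hg; case: (leP m 1) => hm.
  by move=> /(RepLo _ _ hm) ->; rewrite subrr; apply: D0.
move=> /(RepH _ _ hm) [py ey]; have [d1 p1] := psih_high hm hg.
have q1 : plusU (psih m g) by apply: (plus_hom HU (k := m)) => //; apply: (lt_trans _ hm).
by split; [apply: (plusB HU) | rewrite piB // p1 ey subrr].
Qed.

Definition DerC (k : int) := forall x, dG k x -> forall l w, 0 < l -> dU l w ->
  Rep (k + l) (bG x (pi w)) (bU (psih k x) w).

Lemma Rep_brr c g y b w : (c <= 0 -> DerC c) -> dG c g -> Rep c g y ->
  0 < b -> dU b w -> Rep (c + b) (bG g (pi w)) (bU y w).
Proof.
move=> hD hg hr hb hw; have pw : plusU w by apply: (plus_hom HU hb).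
case: (ltP 1 c) => hc.
  move: hr => /(RepH _ _ hc) [py ey]; apply/RepH; first by lia.
  by split; [apply: (plus_br HU) | rewrite pibr // ey].
move: hr => /(RepLo _ _ hc) ->.
case: (leP c 0) => hc0; first by apply: hD.
have ec : c = 1 by lia.
move: hg; rewrite ec psih1 => hg; apply/RepH; first by lia.
have pj : plusU (j g) by apply: (plus_hom HU _ (jdeg hg)).
by split; [apply: (plus_br HU) | rewrite pibr // pij].
Qed.

Lemma DerC_ind n : (forall m, (m < n)%N -> DerC (- m%:Z)) -> DerC (- n%:Z).
Proof.
move=> IH x hx.
have IHc : forall c, - n%:Z < c -> c <= 0 -> DerC c.
  move=> c h1 h2; have e : c = - (absz c)%:Z by lia.
  by rewrite e; apply: IH; lia.
have hk : - n%:Z <= 0 by rewrite oppr_le0.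
apply: (hom_gen HU (GenU HU Hfree)
  (Th := fun l w => Rep (- n%:Z + l) (bG x (pi w)) (bU (psih (- n%:Z) x) w))).
- by move=> l hl /=; rewrite pi0 (br0r HG) (br0r HU); apply: Rep0.
- move=> l a v w hl hv hw tv tw /=.
  have pv := plus_hom HU hl hv; have pw := plus_hom HU hl hw.
  rewrite piL // (brDZr HG) (brDZr HU); apply: RepL => //;
    by apply: (brdeg HG) => //; apply: pideg.
- move=> a b v w ha hb hv hw tv tw /=.
  have pv := plus_hom HU ha hv; have pw := plus_hom HU hb hw.
  have dpsi := psih_deg hx.
  rewrite pibr // (jacobi HU w dpsi hv) (jacobi HG (pi w) hx (pideg pv hv)).
  have T1 : Rep (- n%:Z + a + b) (bG (bG x (pi v)) (pi w)) (bU (bU (psih (- n%:Z) x) v) w).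
    apply: Rep_brr => //; last by apply: (brdeg HG) => //; apply: pideg.
    by move=> hc; apply: IHc => //; lia.
  have T2 : Rep (- n%:Z + b + a) (bG (bG x (pi w)) (pi v)) (bU (bU (psih (- n%:Z) x) w) v).
    apply: Rep_brr => //; last by apply: (brdeg HG) => //; apply: pideg.
    by move=> hc; apply: IHc => //; lia.
  rewrite (antisym HU hv (brdeg HU dpsi hw)).
  rewrite (antisym HG (pideg pv hv) (brdeg HG hx (pideg pw hw))).
  have e : - n%:Z + b + a = - n%:Z + (a + b) by rewrite addrAC addrA.
  have e' : - n%:Z + a + b = - n%:Z + (a + b) by rewrite addrA.
  rewrite e in T2; rewrite e' in T1.
  rewrite -!scaleNr !scalerA [X in Rep _ X _]addrC [X in Rep _ _ X]addrC.
  apply: RepL => //.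
  + by rewrite -e; exact: (brdeg HG (brdeg HG hx (pideg pw hw)) (pideg pv hv)).
  + by rewrite -e'; exact: (brdeg HG (brdeg HG hx (pideg pv hv)) (pideg pw hw)).
- move=> u hu /=; have [h dh <-] := jsurj hu.
  rewrite pij // psih_br1 //; apply/RepLo => //; lia.
Qed.

Lemma DerC_le k : k <= 0 -> DerC k.
Proof.
move=> hk; have e : k = - (absz k)%:Z by lia.
have H : forall n, DerC (- n%:Z) by move=> n; elim/ltn_ind: n => n IH; apply: DerC_ind.
by rewrite e; apply: H.
Qed.



Lemma psih_sub m g1 c g2 : m <= 1 -> dG m g1 -> dG m g2 ->
  psih m (g1 - c *: g2) = psih m g1 - c *: psih m g2.
Proof.
move=> hm h1 h2; rewrite -scaleNr addrC psih_lin // scaleNr addrC //.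
Qed.

Lemma NegQ_step n :
  (forall a b x z, a <= 0 -> b <= 0 -> a + b = 1 - n%:Z -> dG a x -> dG b z ->
     bU (psih a x) (psih b z) = psih (a + b) (bG x z)) ->
  forall a b x z, a <= 0 -> b <= 0 -> a + b = - n%:Z -> dG a x -> dG b z ->
     bU (psih a x) (psih b z) = psih (a + b) (bG x z).
Proof.
move=> IH.
have T : forall a c x z, a <= 0 -> c <= 1 -> a + c = 1 - n%:Z -> dG a x -> dG c z ->
    bU (psih a x) (psih c z) = psih (a + c) (bG x z).
  move=> a c x z ha hc hac hx hz; case: (leP c 0) => hc0; first by apply: IH.
  have ec : c = 1 by lia.
  by move: hz; rewrite ec psih1 => hz; rewrite psih_br1.
move=> a b x z ha hb hab hx hz.
have hx' := psih_deg hx; have hz' := psih_deg hz.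
apply/eqP; rewrite -subr_eq0; apply/eqP.
apply: (@Uneg_inj (a + b)); first by lia.
  apply: (degB HU); first by apply: (brdeg HU).
  by apply: psih_deg; apply: (brdeg HG).
move=> u hu; have [h dh <-] := jsurj hu.
have J := jacobi HU (j h) hx' hz'.
have J' : bU (bU (psih a x) (psih b z)) (j h) =
    bU (psih a x) (bU (psih b z) (j h)) - ssign K a b *: bU (psih b z) (bU (psih a x) (j h)).
  by rewrite J addrK.
have JG := jacobi HG h hx hz.
have JG' : bG (bG x z) h = bG x (bG z h) - ssign K a b *: bG z (bG x h).
  by rewrite JG addrK.
rewrite (brBl HU) J'.
rewrite (psih_br1 (k := b)) // (psih_br1 (k := a)) //.
rewrite (psih_br1 _ (brdeg HG hx hz) dh) ?JG'; last by lia.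
have dzh : dG (b + 1) (bG z h) by apply: (brdeg HG).
have dxh : dG (a + 1) (bG x h) by apply: (brdeg HG).
rewrite (T a (b + 1)) //; try lia.
rewrite (T b (a + 1)) //; try lia.
have e1 : a + (b + 1) = a + b + 1 by rewrite addrA.
have e2 : b + (a + 1) = a + b + 1 by rewrite addrCA addrA.
rewrite e1 e2 psih_sub ?subrr //; first by lia.
  by rewrite -e1; apply: (brdeg HG).
by rewrite -e2; apply: (brdeg HG).
Qed.

Lemma NegQ_n n : forall a b x z, a <= 0 -> b <= 0 -> a + b = - n%:Z -> dG a x -> dG b z ->
    bU (psih a x) (psih b z) = psih (a + b) (bG x z).
Proof.
elim: n => [|n IH]; apply: NegQ_step.
  by move=> a b x z ha hb hab; exfalso; lia.
by move=> a b x z ha hb hab; apply: IH => //; lia.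
Qed.

Lemma NegQ a b x z : a <= 0 -> b <= 0 -> dG a x -> dG b z ->
  bU (psih a x) (psih b z) = psih (a + b) (bG x z).
Proof. by move=> ha hb; apply: (@NegQ_n (absz (- (a + b))%R) a b x z) => //; lia. Qed.

Lemma QRep a b x z : dG a x -> dG b z ->
  Rep (a + b) (bG x z) (bU (psih a x) (psih b z)).
Proof.
move=> hx hz; case: (leP a 0) => ha; case: (leP b 0) => hb.
- by apply/RepLo; [lia | rewrite NegQ].
- by have := DerC_le ha hx hb (psih_deg hz); rewrite psih_pi //; lia.
- have h1a : 1 <= a by lia.
  have := DerC_le hb hz ha (psih_deg hx); rewrite (psih_pi h1a hx).
  have e : b + a = a + b := addrC b a.
  rewrite (antisym HU (psih_deg hx) (psih_deg hz)) (antisym HG hx hz) e -!scaleNr => R.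
  by apply: RepZ => //; rewrite -e; apply: (brdeg HG).
- apply/RepH; first by lia.
  have p1 : plusU (psih a x) by apply: psih_plus => //; lia.
  have p2 : plusU (psih b z) by apply: psih_plus => //; lia.
  split; first by apply: (plus_br HU).
  by rewrite pibr // !psih_pi //; lia.
Qed.

Lemma Qhom a b x z : dG a x -> dG b z ->
  D (psih (a + b) (bG x z) - bU (psih a x) (psih b z)).
Proof. by move=> hx hz; apply: RepDk; [apply: (brdeg HG) | apply: QRep]. Qed.

Lemma N_hom k x : dG k x -> idealiser K D (psih k x).
Proof.
move=> hx d hd; case: (ltP 0 k) => hk.
  by apply: Dbrl => //; apply: psih_plus.
have [pd pid] := hd.
rewrite [d](expand HU) (br_sumr HU); apply: Dsum => l _.
case: (leP l 0) => hl; first by rewrite ((plusP HU _).1 pd l hl) (br0r HU); apply: D0.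
have := DerC_le hk hx hl (cmp_deg HU l d).
rewrite pi_cmp // pid (cmp0 HG) (br0r HG) => R.
have := RepDk (deg0 HG _) R; rewrite psih0 sub0r; apply: DNr.
Qed.

Lemma trans_helper k y : k <= 0 -> dG k y -> (forall h, dG 1 h -> bG y h = 0) -> y = 0.
Proof.
move=> hk hy hyh; apply: Htrans.
  apply/(in_degsP HG) => l hl; apply: (cmp_homN HG hy).
  by apply/eqP => el; apply: hl; rewrite el.
have Th : forall l v, 0 < l -> dG l v -> bG v y = 0.
  apply: (hom_gen HG Hgen (Th := fun l v => bG v y = 0)).
  - by move=> l _; apply: (br0l HG).
  - by move=> l a v w _ _ _ tv tw; rewrite (brDZl HG) tv tw scaler0 addr0.
  - move=> a b v w _ _ hv hw tv tw.
    have J := jacobi HG y hv hw; rewrite tw tv !(br0r HG) scaler0 addr0 in J.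
    by rewrite -J.
  - by move=> u hu; rewrite (antisym HG hu hy) hyh // scaler0 oppr0.
move=> w pw; rewrite [w](expand HG) (br_suml HG); apply: big1_seq => l _.
case: (leP l 0) => hl; first by rewrite ((plusP HG _).1 pw l hl) (br0l HG).
by apply: (Th l) => //; apply: (cmp_deg HG).
Qed.

Lemma psih_inj_n n : forall y, dG (- n%:Z) y -> psih (- n%:Z) y = 0 -> y = 0.
Proof.
have hk : forall n : nat, - n%:Z <= 0 by move=> m; rewrite oppr_le0.
elim: n => [|n IH] y hy h0; apply: (trans_helper (hk _) hy) => h hh.
  have : psih (- 0%:Z + 1) (bG y h) = 0 by rewrite -psih_br1 // h0 (br0l HU).
  rewrite oppr0 add0r psih1 -j0 => /jinj; apply => //; last by apply: (deg0 HG).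
  by have := brdeg HG hy hh; rewrite oppr0 add0r.
have : psih (- (n.+1)%:Z + 1) (bG y h) = 0 by rewrite -psih_br1 // h0 (br0l HU).
have e : - (n.+1)%:Z + 1 = - n%:Z by lia.
rewrite e => /IH; apply.
by rewrite -e; apply: (brdeg HG).
Qed.

Lemma psih_inj k x : k <= 0 -> dG k x -> psih k x = 0 -> x = 0.
Proof.
move=> hk; have e : k = - (absz k)%:Z by lia.
by rewrite e; apply: psih_inj_n.
Qed.


Definition psi (g : car K G) : car K U := \sum_(k <- supp g) psih k (cmp k g).

Lemma psi_over g s : uniq s -> (forall k, k \notin s -> cmp k g = 0) ->
  psi g = \sum_(k <- s) psih k (cmp k g).
Proof.
move=> us hs; rewrite /psi; apply: sum_supp => //.
- by apply: (supp_uniq HG).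
- by move=> k hk; rewrite (cmp_supp HG hk) psih0.
- by move=> k hk; rewrite hs // psih0.
Qed.

Lemma psi_hom k g : dG k g -> psi g = psih k g.
Proof.
move=> hg; rewrite (@psi_over g [:: k]) //.
  by rewrite big_cons big_nil addr0 (cmp_homE HG hg).
by move=> l; rewrite inE => hl; apply: (cmp_homN HG hg hl).
Qed.

Lemma psi0 : psi 0 = 0.
Proof. by rewrite (psi_hom (deg0 HG 0)) psih0. Qed.

Lemma notin_undup3 (k : int) (A B C : seq int) :
  k \notin undup (A ++ B ++ C) -> [/\ k \notin A, k \notin B & k \notin C].
Proof. by rewrite mem_undup !mem_cat !negb_or => /and3P. Qed.

Lemma psi_linD a g h : D (psi (a *: g + h) - (a *: psi g + psi h)).
Proof.
pose s := undup (supp g ++ supp h ++ supp (a *: g + h)).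
have us : uniq s by apply: undup_uniq.
have Hg : forall k, k \notin s -> cmp k g = 0.
  by move=> k /notin_undup3 [h1 _ _]; apply: (cmp_supp HG).
have Hh : forall k, k \notin s -> cmp k h = 0.
  by move=> k /notin_undup3 [_ h1 _]; apply: (cmp_supp HG).
have Hgh : forall k, k \notin s -> cmp k (a *: g + h) = 0.
  by move=> k /notin_undup3 [_ _ h1]; apply: (cmp_supp HG).
rewrite (psi_over us Hg) (psi_over us Hh) (psi_over us Hgh) scaler_sumr -big_split -sumrB /=.
apply: Dsum => k _; rewrite (cmp_lin HG); apply: psih_linD; exact: (cmp_deg HG).
Qed.

Lemma psi_sumD (I : eqType) (r : seq I) F :
  D (psi (\sum_(i <- r) F i) - \sum_(i <- r) psi (F i)).
Proof.
elim: r => [|i r IH]; first by rewrite !big_nil psi0 subrr; apply: D0.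
rewrite !big_cons.
have h1 := psi_linD 1 (F i) (\sum_(j <- r) F j); rewrite !scale1r in h1.
apply: (Dtrans h1).
by rewrite opprD addrACA subrr add0r.
Qed.

Lemma psi_br g h : D (psi (bG g h) - bU (psi g) (psi h)).
Proof.
have e1 : bG g h = \sum_(a <- supp g) \sum_(b <- supp h) bG (cmp a g) (cmp b h).
  rewrite {1}[g](expand HG) {1}[h](expand HG) (br_suml HG); apply: eq_bigr => a _.
  by rewrite (br_sumr HG).
have e2 : bU (psi g) (psi h) =
    \sum_(a <- supp g) \sum_(b <- supp h) bU (psih a (cmp a g)) (psih b (cmp b h)).
  by rewrite /psi (br_suml HU); apply: eq_bigr => a _; rewrite (br_sumr HU).
rewrite e1 e2; apply: (Dtrans (psi_sumD _ _)).
apply: (@Dtrans _ (\sum_(a <- supp g) \sum_(b <- supp h) psi (bG (cmp a g) (cmp b h)))).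
  by rewrite -sumrB; apply: Dsum => a _; apply: psi_sumD.
rewrite -sumrB; apply: Dsum => a _; rewrite -sumrB; apply: Dsum => b _.
rewrite (psi_hom (brdeg HG (cmp_deg HG a g) (cmp_deg HG b h))).
by apply: Qhom; apply: (cmp_deg HG).
Qed.

Lemma psi_N g : idealiser K D (psi g).
Proof.
move=> d hd; rewrite /psi (br_suml HU); apply: Dsum => k _.
by apply: N_hom => //; apply: (cmp_deg HG).
Qed.

Lemma psi_graded k g : dG k g ->
  exists y, [/\ dU k y, idealiser K D y & D (psi g - y)].
Proof.
move=> hg; exists (psih k g); split; first by apply: psih_deg.
  by apply: N_hom.
by rewrite (psi_hom hg) subrr; apply: D0.
Qed.

Lemma psi_inj g : D (psi g) -> g = 0.
Proof.
move=> hD.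
have hc : forall k, cmp k g = 0.
  move=> k; case: (boolP (k \in supp g)) => hk; last by apply: (cmp_supp HG).
  have e := @cmp_weak _ _ HU (psi g) (supp g) (fun k => psih k (cmp k g)) k
    (supp_uniq HG g) (fun i _ => psih_deg (cmp_deg HG i g)) erefl.
  rewrite hk in e; have Dk := Dcmp k hD; rewrite e in Dk.
  case: (leP 1 k) => h1.
    by case: Dk => _; rewrite (psih_pi h1 (cmp_deg HG k g)).
  have hk1 : k <= 1 by lia.
  have h0 := Dlow (psih_deg (cmp_deg HG k g)) hk1 Dk.
  by apply: (psih_inj _ (cmp_deg HG k g) h0); lia.
by rewrite [g](expand HG) big1_seq // => k _; apply: hc.
Qed.

Lemma main_inj : inj_morph_to_quotient K G U (idealiser K D) D.
Proof.
exists psi; split; [|split; [|split; [|split]]].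
- exact: psi_N.
- exact: psi_linD.
- exact: psi_graded.
- exact: psi_br.
- exact: psi_inj.
Qed.

End Main.

Lemma prop_generic (K : fieldType) : prop3p9_statement K.

Proof. rewrite /prop3p9_statement. move=> G U j pi HG Ht Hg HU Hp. exact: (main_inj HG Ht Hg HU Hp). Qed.

Theorem proposition3p9 :
  forall R : realType,
    prop3p9_statement (R : fieldType) /\ prop3p9_statement (R[i] : fieldType).
Proof. by move=> R; split; apply: prop_generic. Qed.
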